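(* Let $G^*=(V,E^* )$ be the true causal DAG and let $G=(V,E)$ be a superstructure for $G^*$. Let $\{S_1,\dots,S_N\}$ be a vertex-covering partition of $V$ (i.e. $\bigcup_i S_i=V$). Then its causal expansion $\{S'_1,\dots,S'_N\}$, where $S'_i=S_i\cup\partial_{\mathrm{out}}(S_i)$, is a causal partition with respect to $G$ and $G^*$.
   Context: Superstructure: an undirected graph $G=(V,E)$ such that every pair of vertices adjacent in $G^*$ is adjacent in $G$. Outer vertex boundary: $\partial_{\mathrm{out}}(S)=\{v\in V\setminus S:\exists u\in S\text{ with } u,v \text{ adjacent in } G\}$. Setting: random variables correspond to the vertices of $G^*$, their joint distribution $P$ factorizes according to $G^*$ and is faithful to it; $X_S$ is the (infinite-sample) data on $S\subseteq V$. A collider on a path is a non-endpoint vertex whose two incident path edges both have an arrowhead at it. For $L\subset V$, an inducing path relative to $L$ between $u$ and $v$ in $G^*$ is a path $(u,q_1,\dots,q_k,v)$ in which every non-endpoint vertex lying in $V\setminus L$ is a collider on the path and an ancestor in $G^*$ of $u$ or $v$. A MAG is a mixed graph (directed and bi-directed edges) with no directed or almost directed cycles and no inducing path between non-adjacent vertices; its Markov equivalence class $[M]$ consists of MAGs with the same $m$-separations, and $PAG[M]$ has the same adjacencies as $M$ with arrowhead/tail marks where shared by all of $[M]$ and circle marks otherwise. The latent MAG $L^{\mathrm{MAG}}(G^*,S)$ on $S$ has $u,v\in S$ adjacent iff there is an inducing path relative to $V\setminus S$ between them in $G^*$, oriented $u\to v$ if $u$ is an ancestor of $v$ in $G^*$,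 $v\to u$ if $v$ is an ancestor of $u$, and $u\leftrightarrow v$ otherwise. Consistent PAG Learner Assumption: $\mathscr{A}$ is a structure learner such that for every $S\subseteq V$, when $P$ is faithful, in the infinite data limit $\mathscr{A}(X_S)=PAG[L^{\mathrm{MAG}}(G^*,S)]$. Causal partition: an overlapping family $\{S'_1,\dots,S'_N\}$ of subsets of $V$ is causal with respect to $G$ and $G^*$ if, for any learner $\mathscr{A}$ satisfying the assumption above: (i) for every edge $\{u,v\}$ of $G$ some $S'_i\supseteq\{u,v\}$; (ii) for any $u,v$ non-adjacent in $G^*$ but adjacent in $G$, there is some $S'_i$ with $u,v\in S'_i$ such that $\mathscr{A}(X_{S'_i})$ has no edge between $u$ and $v$; (iii) for any unshielded collider $u\to v\leftarrow w$ in $G^*$ ($u,w$ non-adjacent) there is some $S'_i$ with $\{u,v,w\}\subseteq S'_i$. *)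

(* Defs.v *)
From mathcomp Require Import all_boot.
From Stdlib Require Import ClassicalDescription.

Set Implicit Arguments.
Unset Strict Implicit.
Unset Printing Implicit Defensive.

Section CausalDefs.
Variable V : finType.

(* g (u,v) = None        : u and v are not adjacent                    *)
(* g (u,v) = Some (a,b)  : there is an edge between u and v, with      *)
(*                         mark a at u and mark b at v.                *)
(* A directed edge u -> v is Some (Tail, Arrow); u <-> v is            *)
(* Some (Arrow, Arrow).  PAGs additionally use Circle marks.           *)
Inductive mark := Tail | Arrow | Circle.

Definition mgraph := {ffun V * V -> option (mark * mark)}.

Definition madj (M : mgraph) (u v : V) : bool :=
  if M (u, v) is Some _ then true else false.
Definition marr (M : mgraph) (a x : V) : bool :=
  if M (a, x) is Some (_, Arrow) then true else false.
Definition mdir (M : mgraph) (u v : V) : bool :=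
  if M (u, v) is Some (Tail, Arrow) then true else false.
Definition mbidir (M : mgraph) (u v : V) : bool :=
  if M (u, v) is Some (Arrow, Arrow) then true else false.
Definition manc (M : mgraph) : rel V := connect (mdir M).

(* positions 1 .. size q.                                              *)
Definition is_path (adj : rel V) (u v : V) (q : seq V) : Prop :=
  path adj u (rcons q v) /\ uniq (u :: rcons q v).

Definition inducing_path (adj : rel V) (arr : V -> V -> bool) (anc : rel V)
    (L : {set V}) (u v : V) (q : seq V) : Prop :=
  is_path adj u v q /\
  forall j, 0 < j <= size q ->
    let p := u :: rcons q v in
    let x := nth u p j in
    x \notin L ->
      [/\ arr (nth u p j.-1) x, arr (nth u p j.+1) x & anc x u || anc x v].

Definition is_MAG (S : {set V}) (M : mgraph) : Prop :=
  (forall u v, M (v, u) = omap (fun p => (p.2, p.1)) (M (u, v))) /\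
  (forall u, M (u, u) = None) /\
  [/\
      (forall u v, M (u, v) <> None -> u \in S /\ v \in S),
      (forall u v, M (u, v) = None \/ M (u, v) = Some (Tail, Arrow) \/
                   M (u, v) = Some (Arrow, Tail) \/ M (u, v) = Some (Arrow, Arrow)),
      (forall u v, mdir M u v -> ~~ manc M v u),
      (forall u v, mbidir M u v -> ~~ manc M u v)
    &
      (forall u v q, u != v -> M (u, v) = None ->
         ~ inducing_path (madj M) (marr M) (manc M) set0 u v q)].

Definition m_connecting (M : mgraph) (Z : {set V}) (u v : V) (q : seq V) : Prop :=
  is_path (madj M) u v q /\
  forall j, 0 < j <= size q ->
    let p := u :: rcons q v in
    let x := nth u p j in
    if marr M (nth u p j.-1) x && marr M (nth u p j.+1) x
    then (exists2 z, z \in Z & manc M x z)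
    else x \notin Z.

Definition m_separated (M : mgraph) (u v : V) (Z : {set V}) : Prop :=
  ~ exists q, m_connecting M Z u v q.

Definition in_markov_class (S : {set V}) (M M' : mgraph) : Prop :=
  is_MAG S M' /\
  forall u v (Z : {set V}), u \in S -> v \in S -> u != v ->
    Z \subset S :\ u :\ v ->
    (m_separated M u v Z <-> m_separated M' u v Z).

(* PAG[M]: mark at v of the edge u-v *)
Definition pag_mark (S : {set V}) (M : mgraph) (u v : V) : mark :=
  if excluded_middle_informative
       (forall M', in_markov_class S M M' -> exists a, M' (u, v) = Some (a, Arrow))
  then Arrow
  else if excluded_middle_informative
       (forall M', in_markov_class S M M' -> exists a, M' (u, v) = Some (a, Tail))
  then Tail
  else Circle.

Definition PAG (S : {set V}) (M : mgraph) : mgraph :=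
  [ffun p : V * V =>
     if M p is Some _ then Some (pag_mark S M p.2 p.1, pag_mark S M p.1 p.2)
     else None].

Definition is_DAG (dE : rel V) : Prop :=
  forall u v, dE u v -> ~~ connect dE v u.

Definition dadj (dE : rel V) (u v : V) : bool := dE u v || dE v u.

Definition latent_MAG (dE : rel V) (S : {set V}) : mgraph :=
  [ffun p : V * V =>
     if excluded_middle_informative
          (p.1 \in S /\ p.2 \in S /\
           exists q, inducing_path (dadj dE) dE (connect dE) (~: S) p.1 p.2 q)
     then (if connect dE p.1 p.2 then Some (Tail, Arrow)
           else if connect dE p.2 p.1 then Some (Arrow, Tail)
           else Some (Arrow, Arrow))
     else None].

(* Consistent PAG learner (infinite-data limit): the output on the data
   X_S is PAG[L^MAG(G*, S)] for every S. *)
Definition consistent_PAG_learner (dE : rel V) (A : {set V} -> mgraph) : Prop :=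
  forall S : {set V}, A S = PAG S (latent_MAG dE S).

Definition superstructure (e : rel V) (dE : rel V) : Prop :=
  (forall u v, e u v = e v u) /\ (forall u v, dE u v -> e u v).

Definition out_boundary (e : rel V) (A : {set V}) : {set V} :=
  [set v | (v \notin A) && [exists u in A, e u v]].

Definition causal_partition (e dE : rel V) (N : nat) (Sp : 'I_N -> {set V}) : Prop :=
  forall A : {set V} -> mgraph, consistent_PAG_learner dE A ->
  [/\
      (forall u v, e u v -> exists i, (u \in Sp i) && (v \in Sp i)),
      (forall u v, ~~ dadj dE u v -> e u v ->
         exists i, [/\ u \in Sp i, v \in Sp i & A (Sp i) (u, v) = None])
    &
      (forall u v w, dE u v -> dE w v -> ~~ dadj dE u w ->
         exists i, [/\ u \in Sp i, v \in Sp i & w \in Sp i])].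

End CausalDefs.

(* Main.v *)
Require Import Defs.
From mathcomp Require Import all_boot.
From Stdlib Require Import Classical ClassicalDescription.

Set Implicit Arguments.
Unset Strict Implicit.

Section Aux.
Variable V : finType.
Implicit Types (dE e : rel V) (T : {set V}) (u v : V).

Lemma in_exp e T u x : u \in T -> e u x -> x \in T :|: out_boundary e T.
Proof.
move=> uT eux; rewrite in_setU; case: (boolP (x \in T)) => //= xT.
by rewrite inE xT /=; apply/existsP; exists u; rewrite uT eux.
Qed.

Lemma dadj_e e dE u x : superstructure e dE -> dadj dE u x -> e u x.
Proof.
case=> sym sub; rewrite /dadj => /orP[h|h]; first exact: sub.
by rewrite sym; apply: sub.
Qed.

Lemma first_step dE e T u v q : is_DAG dE -> superstructure e dE -> u \in T ->
  ~~ dadj dE u v ->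
  inducing_path (dadj dE) dE (connect dE) (~: (T :|: out_boundary e T)) u v q ->
  exists x, dE u x && connect dE x v.
Proof.
move=> dag ss uT nuv [[pth _] ind].
case: q pth ind => [|x q'] pth ind.
  by move: pth => /= /andP[h _]; rewrite h in nuv.
move: pth => /= /andP[aux _].
have xin : x \in T :|: out_boundary e T by apply: (in_exp uT); apply: dadj_e ss aux.
have := ind 1 isT; rewrite /= inE xin => /(_ isT) [h1 _ h3].
exists x; rewrite h1 /=.
case/orP: h3 => // cxu.
by have := dag _ _ h1; rewrite cxu.
Qed.

Lemma last_step dE e T u v q : is_DAG dE -> superstructure e dE -> v \in T ->
  ~~ dadj dE u v ->
  inducing_path (dadj dE) dE (connect dE) (~: (T :|: out_boundary e T)) u v q ->
  exists x, dE v x && connect dE x u.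
Proof.
move=> dag ss vT nuv [[pth _] ind].
case/lastP: q pth ind => [|q' x] pth ind.
  by move: pth => /= /andP[h _]; rewrite h in nuv.
move: pth; rewrite rcons_path last_rcons => /andP[_ axv].
have xin : x \in T :|: out_boundary e T.
  apply: (in_exp vT); apply: dadj_e ss _; by rewrite /dadj orbC.
have := ind (size q').+1; rewrite size_rcons leqnn /=.
have e1 : nth u (rcons (rcons q' x) v) (size q') = x.
  by rewrite nth_rcons size_rcons ltnSn nth_rcons ltnn eqxx.
have e2 : nth u (rcons (rcons q' x) v) (size q').+1 = v.
  by rewrite nth_rcons size_rcons ltnn eqxx.
rewrite e1 e2 inE xin => /(_ isT) /(_ isT) [_ h2 h3].
exists x; rewrite h2 /=.
case/orP: h3 => // cxv.
by have := dag _ _ h2; rewrite cxv.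
Qed.

End Aux.

Theorem lemma2 (V : finType) (dE e : rel V) (N : nat) (S : 'I_N -> {set V}) :
  is_DAG dE ->
  superstructure e dE ->
  \bigcup_(i < N) S i = [set: V] ->
  causal_partition e dE (fun i => S i :|: out_boundary e (S i)).
Proof.
move=> dag ss cov A cons.
have inS : forall x, exists i, x \in S i.
  move=> x; have : x \in \bigcup_(i < N) S i by rewrite cov inE.
  by case/bigcupP => i _ xi; exists i.
have ipath : forall T u v, A T (u, v) <> None ->
    exists q, inducing_path (dadj dE) dE (connect dE) (~: T) u v q.
  move=> T u v; rewrite cons /PAG ffunE /latent_MAG ffunE /=.
  case: excluded_middle_informative => [[_ [_ h]] _ | _] //.
split.
- move=> u v euv; have [i ui] := inS u; exists i.
  by rewrite in_setU ui /=; apply: in_exp ui euv.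
- move=> u v nuv euv.
  have [i ui] := inS u; have [j vj] := inS v.
  have uSi : u \in S i :|: out_boundary e (S i) by rewrite in_setU ui.
  have vSi : v \in S i :|: out_boundary e (S i) by apply: in_exp ui euv.
  have vSj : v \in S j :|: out_boundary e (S j) by rewrite in_setU vj.
  have uSj : u \in S j :|: out_boundary e (S j).
    by apply: in_exp vj _; rewrite ss.1.
  case: (classic (A (S i :|: out_boundary e (S i)) (u, v) = None)) => Hi.
    by exists i.
  case: (classic (A (S j :|: out_boundary e (S j)) (u, v) = None)) => Hj.
    by exists j.
  have [q1 iq1] := ipath _ _ _ Hi; have [q2 iq2] := ipath _ _ _ Hj.
  have [x /andP[ux xv]] := first_step dag ss ui nuv iq1.
  have [y /andP[vy yu]] := last_step dag ss vj nuv iq2.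
  have cxu : connect dE x u.
    by apply: connect_trans xv (connect_trans (connect1 vy) yu).
  by have := dag _ _ ux; rewrite cxu.
- move=> u v w uv wv nuw; have [i vi] := inS v; exists i; split.
  + by apply: in_exp vi _; rewrite ss.1; apply: ss.2.
  + by rewrite in_setU vi.
  + by apply: in_exp vi _; rewrite ss.1; apply: ss.2.
Qed.
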